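(* Let $k\ge l\ge0$, $H\in\mathcal{H}_{k,l}(\mathbb{R}^{2m},\mathbb{C})$, and integers $i\ge0$, $0\le j\le k-l$. Then $$C\big(C^iS_u^jH\big)=C^{i+1}S_u^jH,\qquad S_u\big(C^iS_u^jH\big)=\frac{H_x+i+1}{H_x+1}\,C^iS_u^{j+1}H.$$
   Context: Fix an integer $m>4$. For $x,u\in\mathbb{R}^m$ let $\mathcal{P}_{p,q}(\mathbb{R}^{2m},\mathbb{C})$ be complex polynomials of degree $p$ in $x$ and $q$ in $u$. Write $|x|^2=\sum x_j^2$, $\langle u,x\rangle=\sum u_jx_j$, $\Delta_x=\sum\partial_{x_j}^2$, $\Delta_u=\sum\partial_{u_j}^2$, $\langle\partial_u,\partial_x\rangle=\sum\partial_{u_j}\partial_{x_j}$, $\langle x,\partial_u\rangle=\sum x_j\partial_{u_j}$, $\langle u,\partial_x\rangle=\sum u_j\partial_{x_j}$, $\mathbb{E}_x=\sum x_j\partial_{x_j}$, $H_x=-(\mathbb{E}_x+\frac m2)$, $\ker(D_1,\dots,D_r)=\bigcap\ker D_i$. Every $P\in\mathcal{P}_{p,q}$ is uniquely $\sum_{a,b\ge0}|x|^{2a}|u|^{2b}H'_{p-2a,q-2b}$ with $H'_{p-2a,q-2b}\in\mathcal{P}_{p-2a,q-2b}\cap\ker(\Delta_x,\Delta_u)$; $\pi_{\mathfrak{s}}P:=H'_{p,q}$. On $\ker(\Delta_x,\Delta_u)$: $S_u=\pi_{\mathfrak{s}}\langle u,\partial_x\rangle$, $C=\pi_{\mathfrak{s}}\langle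 u,x\rangle$. For $k\ge l\ge0$, $\mathcal{H}_{k,l}=\mathcal{P}_{k,l}\cap\ker(\Delta_x,\Delta_u,\langle\partial_u,\partial_x\rangle,\langle x,\partial_u\rangle)$. Convention: the rational function of $H_x$ written to the left is evaluated at the eigenvalue of $H_x$ on the bihomogeneous polynomial $C^iS_u^{j+1}H$. *)

(* Defs.v *)
From mathcomp Require Import all_boot all_order all_algebra.
From mathcomp.multinomials Require Import mpoly.
From Stdlib Require Import ClassicalEpsilon.

Set Implicit Arguments.
Unset Strict Implicit.
Unset Printing Implicit Defensive.

Import Order.TTheory GRing.Theory Num.Theory.
Local Open Scope ring_scope.

(* Polynomials in (x, u) in R^m x R^m, i.e. in 2m variables indexed by
   'I_(m + m): variable (lshift m j) is x_j and (rshift m j) is u_j.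
   Coefficients in a field F (numClosedFieldType, e.g. the complex numbers). *)
Section Ops.
Variables (F : numClosedFieldType) (m : nat).

Definition poly2 := {mpoly F[m + m]}.

Definition xv (j : 'I_m) : poly2 := 'X_(lshift m j).
Definition uv (j : 'I_m) : poly2 := 'X_(rshift m j).
Definition dx (j : 'I_m) (P : poly2) : poly2 := mderiv (lshift m j) P.
Definition du (j : 'I_m) (P : poly2) : poly2 := mderiv (rshift m j) P.

Definition normx2 : poly2 := \sum_(j < m) xv j ^+ 2.
Definition normu2 : poly2 := \sum_(j < m) uv j ^+ 2.
Definition ux : poly2 := \sum_(j < m) uv j * xv j.

Definition Lapx (P : poly2) : poly2 := \sum_(j < m) dx j (dx j P).
Definition Lapu (P : poly2) : poly2 := \sum_(j < m) du j (du j P).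
Definition dudx (P : poly2) : poly2 := \sum_(j < m) du j (dx j P).
Definition xdu (P : poly2) : poly2 := \sum_(j < m) xv j * du j P.
Definition udx (P : poly2) : poly2 := \sum_(j < m) uv j * dx j P.

Definition xdeg (mn : 'X_{1..m + m}) : nat := (\sum_(j < m) mn (lshift m j))%N.
Definition udeg (mn : 'X_{1..m + m}) : nat := (\sum_(j < m) mn (rshift m j))%N.

Definition bihomog (p q : nat) (P : poly2) : bool :=
  all (fun mn => (xdeg mn == p) && (udeg mn == q)) (msupp P).

Definition dharm (P : poly2) : Prop := Lapx P = 0 /\ Lapu P = 0.

Definition Hkl (k l : nat) (H : poly2) : Prop :=
  bihomog k l H /\ Lapx H = 0 /\ Lapu H = 0 /\ dudx H = 0 /\ xdu H = 0.

(* The decomposition P = sum_{a,b} |x|^{2a} |u|^{2b} H'_{a,b} with every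
   H'_{a,b} in ker(Delta_x, Delta_u); pi_s P is the (0,0) component H'_{0,0}.
   (Applied componentwise to the bihomogeneous parts; on P in P_{p,q} this
   is exactly the paper's pi_s, since then H'_{a,b} lies in P_{p-2a,q-2b}.) *)
Definition is_pis (P H : poly2) : Prop :=
  exists (N : nat) (Hf : nat -> nat -> poly2),
    (forall a b, dharm (Hf a b)) /\
    P = \sum_(a < N.+1) \sum_(b < N.+1) normx2 ^+ a * normu2 ^+ b * Hf a b /\
    H = Hf 0%N 0%N.

Definition pis (P : poly2) : poly2 := epsilon (inhabits 0) (is_pis P).

Definition Su (P : poly2) : poly2 := pis (udx P).
Definition Cop (P : poly2) : poly2 := pis (ux * P).

(* eigenvalue of H_x = -(E_x + m/2) on a polynomial of x-degree p *)
Definition Hx_eig (p : int) : F := - (p%:~R + m%:R / 2).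

End Ops.

(* Main.v *)
Require Import Defs.
From mathcomp Require Import all_boot all_order all_algebra.
From mathcomp.multinomials Require Import mpoly.
Import GRing.Theory Num.Theory.
Local Open Scope ring_scope.
From HB Require Import structures.
From mathcomp Require Import ring zify.
From Stdlib Require Import ClassicalEpsilon.
Import Order.TTheory GRing.Theory Num.Theory.
Set Implicit Arguments.
Unset Strict Implicit.
Unset Printing Implicit Defensive.


Section Gen.
Variables (F : numClosedFieldType) (m : nat).
Local Notation P2 := (poly2 F m).
Local Notation side := ('I_m -> 'I_(m + m)).
Implicit Types (P Q f g : P2) (s t : side).

Definition nrm s : P2 := \sum_(j < m) ('X_(s j) : P2) ^+ 2.
Definition pr s t : P2 := \sum_(j < m) ('X_(s j) : P2) * 'X_(t j).
Definition Lap s P : P2 := \sum_(j < m) mderiv (s j) (mderiv (s j) P).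
Definition Eul s P : P2 := \sum_(j < m) 'X_(s j) * mderiv (s j) P.
Definition mix s t P : P2 := \sum_(j < m) 'X_(s j) * mderiv (t j) P.
Definition dd s t P : P2 := \sum_(j < m) mderiv (s j) (mderiv (t j) P).

Lemma Lap_is_linear s : linear (Lap s).
Proof. by move=> c p q; rewrite /Lap scaler_sumr -big_split; apply: eq_bigr => j _; rewrite !mderivD !mderivZ. Qed.
HB.instance Definition _ s := GRing.isLinear.Build F P2 P2 _ (Lap s) (Lap_is_linear s).
Lemma Eul_is_linear s : linear (Eul s).
Proof. by move=> c p q; rewrite /Eul scaler_sumr -big_split; apply: eq_bigr => j _; rewrite mderivD mderivZ mulrDr scalerAr. Qed.
HB.instance Definition _ s := GRing.isLinear.Build F P2 P2 _ (Eul s) (Eul_is_linear s).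
Lemma mix_is_linear s t : linear (mix s t).
Proof. by move=> c p q; rewrite /mix scaler_sumr -big_split; apply: eq_bigr => j _; rewrite mderivD mderivZ mulrDr scalerAr. Qed.
HB.instance Definition _ s t := GRing.isLinear.Build F P2 P2 _ (mix s t) (mix_is_linear s t).
Lemma dd_is_linear s t : linear (dd s t).
Proof. by move=> c p q; rewrite /dd scaler_sumr -big_split; apply: eq_bigr => j _; rewrite !mderivD !mderivZ. Qed.
HB.instance Definition _ s t := GRing.isLinear.Build F P2 P2 _ (dd s t) (dd_is_linear s t).

Lemma DX (i k : 'I_(m + m)) : mderiv i ('X_k : P2) = (k == i)%:R.
Proof.
rewrite mderivX mnm1E; case: eqP => [->|_]; last by rewrite scale0r.
by rewrite -{1}(add0m U_(i)%MM) addmK mpolyX0 scale1r.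
Qed.

Lemma sum_delta (G : 'I_m -> P2) i : \sum_(j < m) (j == i)%:R * G j = G i.
Proof.
rewrite (bigD1 i) //= eqxx mul1r big1 ?addr0 // => j /negbTE ->; by rewrite mul0r.
Qed.
Lemma sum_delta' (G : 'I_m -> P2) i : \sum_(j < m) G j * (j == i)%:R = G i.
Proof. by rewrite -(sum_delta G i); apply: eq_bigr => j _; rewrite mulrC. Qed.

Lemma mderiv_sum i (I : Type) (r : seq I) (Pr : pred I) (G : I -> P2) :
  mderiv i (\sum_(k <- r | Pr k) G k) = \sum_(k <- r | Pr k) mderiv i (G k).
Proof. exact: raddf_sum. Qed.

End Gen.

Section Id1.
Variables (F : numClosedFieldType) (m : nat).
Local Notation P2 := (poly2 F m).
Local Notation side := ('I_m -> 'I_(m + m)).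
Variables (s t : side) (hs : injective s) (hst : forall a b, s a != t b).
Implicit Types (P Q f g : P2).

Lemma DXss i j : mderiv (s i) ('X_(s j) : P2) = (j == i)%:R.
Proof. by rewrite DX (inj_eq hs). Qed.
Lemma DXst i j : mderiv (s i) ('X_(t j) : P2) = 0.
Proof. by rewrite DX eq_sym (negbTE (hst _ _)). Qed.

Lemma Dnrm_ss i : mderiv (s i) (nrm F s) = 'X_(s i) *+ 2.
Proof.
rewrite /nrm mderiv_sum.
under eq_bigr do rewrite expr2 mderivM !DXss.
by rewrite big_split /= sum_delta sum_delta' mulr2n.
Qed.
Lemma Dnrm_st i : mderiv (s i) (nrm F t) = 0.
Proof.
rewrite /nrm mderiv_sum big1 // => j _.
by rewrite expr2 mderivM !DXst mulr0 mul0r addr0.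
Qed.
Lemma Dpr i : mderiv (s i) (pr F t s) = 'X_(t i).
Proof.
rewrite /pr mderiv_sum.
under eq_bigr do rewrite mderivM DXss DXst mul0r add0r.
by rewrite sum_delta'.
Qed.
End Id1.
Arguments DXss {F m s} hs i j.
Arguments DXst {F m s t} hst i j.
Arguments Dnrm_ss {F m s} hs i.
Arguments Dnrm_st {F m s t} hst i.
Arguments Dpr {F m s t} hs hst i.


Section Id2.
Variables (F : numClosedFieldType) (m : nat).
Local Notation P2 := (poly2 F m).
Local Notation side := ('I_m -> 'I_(m + m)).
Lemma swapD (l1 l2 : seq 'I_(m + m)) (f : P2) :
  foldr (fun i p => mderiv i p) f (l1 ++ l2) = foldr (fun i p => mderiv i p) f (l2 ++ l1).
Proof. by apply: mderiv_perm; rewrite perm_catC. Qed.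
Lemma sw22 a b (f : P2) : mderiv a (mderiv a (mderiv b (mderiv b f))) = mderiv b (mderiv b (mderiv a (mderiv a f))).
Proof. exact: (swapD [:: a; a] [:: b; b]). Qed.
Lemma sw211 a b c (f : P2) : mderiv a (mderiv a (mderiv b (mderiv c f))) = mderiv b (mderiv c (mderiv a (mderiv a f))).
Proof. exact: (swapD [:: a; a] [:: b; c]). Qed.
Lemma sw12 a b (f : P2) : mderiv a (mderiv b (mderiv b f)) = mderiv b (mderiv b (mderiv a f)).
Proof. exact: (swapD [:: a] [:: b; b]). Qed.
Lemma Dnat i k : mderiv i (k%:R : P2) = 0.
Proof. by rewrite -mpolyC_nat mderivC. Qed.
Lemma sum_deltaS (G : 'I_m -> P2) j : \sum_(i < m) (j == i)%:R * G i = G j.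
Proof. by rewrite -(sum_delta G j); apply: eq_bigr => i _; rewrite eq_sym. Qed.
Variables (s t : side) (hs : injective s) (ht : injective t) (hst : forall a b, s a != t b).
Let hts a b : t a != s b. Proof. by rewrite eq_sym. Qed.
Implicit Types (P Q f g : P2).
Local Notation msum := (mderiv_sum _ (index_enum 'I_m)).
Arguments mderiv_sum {F m} i {I} r Pr G.

Lemma I1 f : Lap s (nrm F s * f) = f *+ (2 * m) + Eul s f *+ 4 + nrm F s * Lap s f.
Proof.
have H i : mderiv (s i) (mderiv (s i) (nrm F s * f)) = f *+ 2 + ('X_(s i) * mderiv (s i) f) *+ 4 + nrm F s * mderiv (s i) (mderiv (s i) f).
  rewrite !(mderivD, mderivM, mderivMn, Dnrm_ss hs, DXss hs) eqxx /=; ring.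
rewrite /Lap /Eul (eq_bigr _ (fun i _ => H i)) big_split big_split /= sumr_const card_ord sumrMnl mulr_sumr -mulrnA.
by rewrite mulnC.
Qed.

Lemma I2 f : Lap s (nrm F t * f) = nrm F t * Lap s f.
Proof.
rewrite /Lap mulr_sumr; apply: eq_bigr => i _.
by rewrite !(mderivD, mderivM, Dnrm_st hst, mderiv0, mul0r, add0r).
Qed.

Lemma I3 f : Lap s (Lap t f) = Lap t (Lap s f).
Proof.
rewrite /Lap; under eq_bigr do rewrite !msum.
under [RHS]eq_bigr do rewrite !msum.
rewrite exchange_big /=; apply: eq_bigr => j _; apply: eq_bigr => i _.
exact: sw22.
Qed.

Lemma I4 f : Lap s (pr F t s * f) = mix t s f *+ 2 + pr F t s * Lap s f.
Proof.
have H i : mderiv (s i) (mderiv (s i) (pr F t s * f)) = ('X_(t i) * mderiv (s i) f) *+ 2 + pr F t s * mderiv (s i) (mderiv (s i) f).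
  rewrite !(mderivD, mderivM, Dpr hs hst, DXst hst, mderivC); ring.
rewrite /Lap /mix (eq_bigr _ (fun i _ => H i)) big_split /= -sumrMnl mulr_sumr //.
Qed.

Lemma I5 f : Lap s (mix t s f) = mix t s (Lap s f).
Proof.
rewrite /Lap /mix; under eq_bigr do rewrite !msum.
under [RHS]eq_bigr do rewrite msum mulr_sumr.
rewrite exchange_big /=; apply: eq_bigr => j _; apply: eq_bigr => i _.
rewrite !(mderivD, mderivM, DXst hst, mderiv0, mul0r, add0r); congr (_ * _).
by rewrite sw12.
Qed.

Lemma I6 f : Lap t (mix t s f) = dd t s f *+ 2 + mix t s (Lap t f).
Proof.
have H j : \sum_(i < m) mderiv (t i) (mderiv (t i) ('X_(t j) * mderiv (s j) f)) =
   mderiv (t j) (mderiv (s j) f) *+ 2 + 'X_(t j) * mderiv (s j) (Lap t f).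
  under eq_bigr do rewrite !(mderivD, mderivM, DXss ht, Dnat, mderiv0, mul0r, add0r).
  rewrite !big_split /= !sum_deltaS /Lap msum mulr_sumr mulr2n.
  rewrite addrA; congr (_ + _); apply: eq_bigr => i _.
  by rewrite sw12.
rewrite /Lap /mix; under eq_bigr do rewrite !msum.
rewrite exchange_big /= (eq_bigr _ (fun j _ => H j)) big_split /= -sumrMnl //.
Qed.

Lemma I7 f : mix t s (pr F t s * f) = nrm F t * f + pr F t s * mix t s f.
Proof.
rewrite /mix; under eq_bigr do rewrite mderivM (Dpr hs hst) mulrDr.
rewrite big_split /= mulr_sumr /nrm mulr_suml; congr (_ + _); apply: eq_bigr => j _; ring.
Qed.

Lemma I8 f : mix t s (nrm F s * f) = (pr F t s * f) *+ 2 + nrm F s * mix t s f.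
Proof.
rewrite /mix; under eq_bigr do rewrite mderivM (Dnrm_ss hs) mulrDr.
rewrite big_split /= mulr_sumr /pr mulr_suml -sumrMnl; congr (_ + _); apply: eq_bigr => j _; ring.
Qed.

Lemma I9 f : mix t s (nrm F t * f) = nrm F t * mix t s f.
Proof.
rewrite /mix mulr_sumr; apply: eq_bigr => j _.
by rewrite mderivM (Dnrm_st hst) mul0r add0r; ring.
Qed.

Lemma ddC f : dd t s f = dd s t f.
Proof. by rewrite /dd; apply: eq_bigr => j _; rewrite mderiv_comm. Qed.

Lemma I10 f : Lap s (dd t s f) = dd t s (Lap s f).
Proof.
rewrite /Lap /dd; under eq_bigr do rewrite !msum.
under [RHS]eq_bigr do rewrite !msum.
rewrite exchange_big /=; apply: eq_bigr => j _; apply: eq_bigr => i _.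
exact: sw211.
Qed.

End Id2.

Section Homs.
Variables (F : numClosedFieldType) (m : nat).
Local Notation P2 := (poly2 F m).
Local Notation side := ('I_m -> 'I_(m + m)).
Implicit Types (P Q f g : P2) (s t : side).

Definition sdeg s (mn : 'X_{1..m + m}) : nat := (\sum_(j < m) mn (s j))%N.
Definition homs s (d : nat) P : bool := all (fun mn => sdeg s mn == d) (msupp P).

Lemma homsP s d P : reflect (forall mn, mn \in msupp P -> sdeg s mn = d) (homs s d P).
Proof. by apply: (iffP allP) => H mn /H /eqP. Qed.

Lemma homs0 s d : homs s d (0 : P2).
Proof. by apply/homsP => mn; rewrite mcoeff_msupp mcoeff0 eqxx. Qed.

Lemma homsD s d P Q : homs s d P -> homs s d Q -> homs s d (P + Q).
Proof.
move=> /homsP hP /homsP hQ; apply/homsP => mn /msuppD_le; rewrite mem_cat.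
by case/orP => [/hP|/hQ].
Qed.

Lemma homsZ s d c P : homs s d P -> homs s d (c *: P).
Proof. by move=> /homsP hP; apply/homsP => mn /msuppZ_le /hP. Qed.

Lemma homsN s d P : homs s d P -> homs s d (- P).
Proof. by move=> h; rewrite -scaleN1r; apply: homsZ. Qed.

Lemma homsB s d P Q : homs s d P -> homs s d Q -> homs s d (P - Q).
Proof. by move=> h1 h2; apply: homsD => //; apply: homsN. Qed.

Lemma homsMn s d P k : homs s d P -> homs s d (P *+ k).
Proof. by move=> h; rewrite -scaler_nat; apply: homsZ. Qed.

Lemma homs_sum s d (I : Type) (r : seq I) (Pr : pred I) (G : I -> P2) :
  (forall i, Pr i -> homs s d (G i)) -> homs s d (\sum_(i <- r | Pr i) G i).
Proof. by move=> h; apply: (big_ind (homs s d)) => //; [apply: homs0|apply: homsD]. Qed.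

Lemma sdegD s m1 m2 : sdeg s (m1 + m2)%MM = (sdeg s m1 + sdeg s m2)%N.
Proof. by rewrite /sdeg -big_split /=; apply: eq_bigr => j _; rewrite mnmDE. Qed.

Lemma sdeg0 s : sdeg s 0%MM = 0%N.
Proof. by rewrite /sdeg big1 // => j _; rewrite mnm0E. Qed.

Lemma homsM s d1 d2 P Q : homs s d1 P -> homs s d2 Q -> homs s (d1 + d2) (P * Q).
Proof.
move=> /homsP hP /homsP hQ; apply/homsP => mn /msuppM_le /allpairsP [[m1 m2]] /= [h1 h2 ->].
by rewrite sdegD (hP _ h1) (hQ _ h2).
Qed.

Lemma homsXm s mn : homs s (sdeg s mn) ('X_[mn] : P2).
Proof. by apply/homsP => k; rewrite msuppX mem_seq1 => /eqP ->. Qed.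

Lemma homs1 s : homs s 0 (1 : P2).
Proof. by rewrite -mpolyX0 -(sdeg0 s); apply: homsXm. Qed.

Lemma homsnat s k : homs s 0 (k%:R : P2).
Proof. by rewrite -scaler_nat; apply: homsZ; apply: homs1. Qed.

Lemma sdegU s (i : 'I_(m + m)) : sdeg s U_(i)%MM = (\sum_(j < m) (i == s j))%N.
Proof. by apply: eq_bigr => j _; rewrite mnm1E. Qed.

Lemma homsX s (i : 'I_(m + m)) : homs s (\sum_(j < m) (i == s j))%N ('X_i : P2).
Proof. by rewrite -sdegU; apply: homsXm. Qed.


Lemma homsX_pow s d P n : homs s d P -> homs s (d * n) (P ^+ n).
Proof.
move=> h; elim: n => [|n ih]; first by rewrite muln0 expr0 homs1.
by rewrite exprS mulnS; apply: homsM.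
Qed.

Lemma homs_ext s d d' P : d = d' -> homs s d P -> homs s d' P.
Proof. by move=> ->. Qed.

Lemma mderiv_supp (i : 'I_(m + m)) P mn :
  mn \in msupp (mderiv i P) -> (mn + U_(i))%MM \in msupp P.
Proof.
rewrite !mcoeff_msupp mcoeff_deriv; apply: contra => /eqP ->; by rewrite mul0rn.
Qed.

Section Sides.
Variables (s t : side) (hs : injective s) (hst : forall a b, s a != t b).

Lemma sdegUs i : sdeg s U_(s i)%MM = 1%N.
Proof.
rewrite sdegU (bigD1 i) //= eqxx big1 // => j /negbTE.
by rewrite eq_sym (inj_eq hs) => ->.
Qed.
Lemma sdegUt i : sdeg s U_(t i)%MM = 0%N.
Proof. by rewrite sdegU big1 // => j _; rewrite eq_sym (negbTE (hst _ _)). Qed.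

Lemma homsXs i : homs s 1 ('X_(s i) : P2).
Proof. by rewrite -(sdegUs i); apply: homsXm. Qed.
Lemma homsXt i : homs s 0 ('X_(t i) : P2).
Proof. by rewrite -(sdegUt i); apply: homsXm. Qed.

Lemma homs_Ds d P i : homs s d P -> homs s d.-1 (mderiv (s i) P).
Proof.
move=> /homsP h; apply/homsP => mn /mderiv_supp /h.
by rewrite sdegD sdegUs addn1 => <-.
Qed.
Lemma homs_Ds0 P i : homs s 0 P -> mderiv (s i) P = 0.
Proof.
move=> /homsP h; apply/msuppnil0; case E: (msupp _) => [|mn r] //.
have : mn \in msupp (mderiv (s i) P) by rewrite E mem_head.
by move=> /mderiv_supp /h; rewrite sdegD sdegUs addn1.
Qed.
Lemma homs_Dt d P i : homs s d P -> homs s d (mderiv (t i) P).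
Proof.
move=> /homsP h; apply/homsP => mn /mderiv_supp /h.
by rewrite sdegD sdegUt addn0.
Qed.

Lemma Eul_X mn : Eul s ('X_[mn] : P2) = 'X_[mn] *+ sdeg s mn.
Proof.
rewrite /Eul /sdeg -sumrMnr; apply: eq_bigr => j _.
rewrite mderivX -scalerAr scaler_nat; case: (posnP (mn (s j))) => [->|hp]; first by rewrite !mulr0n.
congr (_ *+ _); rewrite /= -mpolyXD; congr 'X_[_].
rewrite addmC submK //; apply/mnm_lepP => k; rewrite mnm1E.
by case: eqP => [<-|]; rewrite ?hp.
Qed.

Lemma Euler d P : homs s d P -> Eul s P = P *+ d.
Proof.
move=> /homsP h; rewrite {1 2}(mpolyE P) raddf_sum /= -sumrMnl big_seq [RHS]big_seq.
apply: eq_bigr => mn hmn; rewrite linearZ /= Eul_X (h _ hmn) scalerMnr //.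
Qed.

End Sides.
End Homs.

Lemma sum_widen (R : nmodType) (G : nat -> R) n1 n2 : (n1 <= n2)%N ->
  (forall a, (n1 <= a)%N -> (a < n2)%N -> G a = 0) ->
  \sum_(a < n2) G a = \sum_(a < n1) G a.
Proof.
move=> h hz; rewrite -!(big_mkord xpredT) (big_cat_nat (leq0n n1) h) /=.
rewrite [X in _ + X]big1_seq ?addr0 // => a /andP[_]; rewrite mem_index_iota => /andP[h1 h2].
exact: hz.
Qed.

Section Fischer.
Variables (F : numClosedFieldType) (m : nat).
Local Notation P2 := (poly2 F m).
Local Notation side := ('I_m -> 'I_(m + m)).
Variables (s t : side) (hs : injective s) (ht : injective t) (hst : forall a b, s a != t b).
Let hts a b : t a != s b. Proof. by rewrite eq_sym. Qed.
Implicit Types (P Q f g : P2).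

Lemma homs_nrm_s : homs s 2 (nrm F s).
Proof. by apply: homs_sum => j _; apply: (homs_ext (mul1n 2)); apply: homsX_pow; apply: homsXs. Qed.
Lemma homs_nrm_t : homs t 0 (nrm F s).
Proof. by apply: homs_sum => j _; apply: (homs_ext (mul0n 2)); apply: homsX_pow; apply: homsXt. Qed.
Lemma homs_nrmX_s a : homs s (2 * a) (nrm F s ^+ a).
Proof. exact: homsX_pow homs_nrm_s. Qed.
Lemma homs_nrmX_t a : homs t 0 (nrm F s ^+ a).
Proof. by apply: (homs_ext (mul0n a)); apply: homsX_pow homs_nrm_t. Qed.

Lemma homs_Lap_s d P : homs s d P -> homs s d.-2 (Lap s P).
Proof. by move=> h; apply: homs_sum => j _; do 2 apply: homs_Ds => //. Qed.
Lemma homs_Lap_t d P : homs t d P -> homs t d (Lap s P).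
Proof. by move=> h; apply: homs_sum => j _; do 2 apply: homs_Dt => //. Qed.
Lemma Lap_small d P : (d < 2)%N -> homs s d P -> Lap s P = 0.
Proof.
case: d => [|[|//]] _ h; rewrite /Lap big1 // => j _.
  by rewrite (homs_Ds0 hs _ h) mderiv0.
by apply: (homs_Ds0 hs); apply: (homs_Ds hs (d:=1)).
Qed.

Lemma I2X a f : Lap t (nrm F s ^+ a * f) = nrm F s ^+ a * Lap t f.
Proof.
elim: a => [|a ih]; first by rewrite !expr0 !mul1r.
by rewrite exprS -mulrA (I2 hts) ih mulrA.
Qed.

Definition cN (b e : nat) : nat := (2 * b.+1 * (2 * b + 2 * e + m))%N.

Lemma LapNP b e g : Lap s g = 0 -> homs s e g ->
  Lap s (nrm F s ^+ b.+1 * g) = (nrm F s ^+ b * g) *+ cN b e.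
Proof.
move=> hL he; elim: b => [|b ih].
  rewrite expr1 expr0 mul1r (I1 hs) (Euler he) hL mulr0 addr0 -mulrnA -mulrnDr.
  by congr (_ *+ _); rewrite /cN; ring.
rewrite exprS -mulrA (I1 hs) ih.
have he2 : homs s (2 * b.+1 + e) (nrm F s ^+ b.+1 * g) by apply: homsM => //; apply: homs_nrmX_s.
rewrite (Euler he2) -mulrnA mulrnAr mulrA -exprS -!mulrnDr.
by congr (_ *+ _); rewrite /cN; ring.
Qed.

Lemma fischer1 (hm : (0 < m)%N) p P : homs s p P -> exists h : nat -> P2,
 [/\ forall a, Lap s (h a) = 0,
     forall a, homs s (p - 2 * a) (h a),
     forall a, (p < 2 * a)%N -> h a = 0,
     (forall q, homs t q P -> forall a, homs t q (h a))
    & (Lap t P = 0 -> forall a, Lap t (h a) = 0)]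
   /\ P = \sum_(a < p.+1) nrm F s ^+ a * h a.
Proof.
elim/ltn_ind: p P => p IH P hP.
have [hL|hL] := eqVneq (Lap s P) 0.
  exists (fun a => if a == 0%N then P else 0); split; first split.
  - by move=> [|a] //=; exact: raddf0.
  - by move=> [|a] /=; rewrite ?muln0 ?subn0 ?homs0.
  - by move=> [|a].
  - by move=> q hq [|a] //=; exact: homs0.
  - by move=> ht0 [|a] //=; exact: raddf0.
  - by rewrite big_ord_recl /= expr0 mul1r big1 ?addr0 // => a _; rewrite mulr0.
have hp : (2 <= p)%N.
  rewrite leqNgt; apply/negP => hp; move: hL; by rewrite (Lap_small hp hP) eqxx.
have hQ : homs s (p - 2) (Lap s P).
  by apply: (homs_ext _ (homs_Lap_s hP)); lia.
have [g [[g1 g2 g3 g4 g5] g6]] := IH (p - 2)%N ltac:(lia) (Lap s P) hQ.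
pose c := fun b => (cN b (p - 2 - 2 * b)%N)%:R : F.
have cnz b : c b != 0.
  by rewrite pnatr_eq0 -lt0n /cN !muln_gt0 /= !addn_gt0 hm !orbT.
pose h := fun a => match a with
  | 0 => P - \sum_(b < (p-2)%N.+1) nrm F s ^+ b.+1 * ((c b)^-1 *: g b)
  | a'.+1 => (c a')^-1 *: g a' end.
exists h; split; first split.
- case=> [|a] /=; last by rewrite linearZ /= g1 scaler0.
  rewrite raddfB (raddf_sum (Lap s)) /=.
  under eq_bigr => b _ do rewrite -scalerAr linearZ /= (LapNP b (g1 b) (g2 b)) -scaler_nat scalerA mulVf // scale1r.
  by rewrite -g6 subrr.
- case=> [|a] /=.
    rewrite muln0 subn0; apply: homsB => //; apply: homs_sum => b _.
    have [hb|hb] := leqP (2 * b) (p - 2).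
      by apply: (homs_ext _ (homsM (homs_nrmX_s b.+1) (homsZ _ (g2 b)))); lia.
    by rewrite (g3 b hb) scaler0 mulr0 homs0.
  by apply: homsZ; apply: (homs_ext _ (g2 a)); lia.
- case=> [|a] //= hpa; rewrite g3 ?scaler0 //; lia.
- move=> q hq [|a] /=.
    apply: homsB => //; apply: homs_sum => b _; apply: (homs_ext (add0n q)); apply: homsM.
      exact: homs_nrmX_t.
    by apply: homsZ; apply: g4; apply: homs_Lap_t.
  by apply: homsZ; apply: g4; apply: homs_Lap_t.
- move=> ht0.
  have gL b : Lap t (g b) = 0 by apply: g5; rewrite I3 ht0 raddf0.
  case=> [|a] /=; last by rewrite linearZ /= gL scaler0.
  rewrite raddfB (raddf_sum (Lap t)) /= ht0 sub0r big1 ?oppr0 // => b _.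
  by rewrite -scalerAr linearZ /= I2X gL mulr0 scaler0.
- rewrite big_ord_recl expr0 mul1r.
  have -> : \sum_(i < p) nrm F s ^+ bump 0 i * h (bump 0 i) = \sum_(b < (p-2)%N.+1) nrm F s ^+ b.+1 * h b.+1.
    apply: (sum_widen (G := fun b => nrm F s ^+ b.+1 * h b.+1)); first lia.
    by move=> a ha _ /=; rewrite g3 ?scaler0 ?mulr0 //; lia.
  by rewrite /= subrK.
Qed.

End Fischer.

Section Pair.
Variables (F : numClosedFieldType) (m : nat).
Local Notation P2 := (poly2 F m).
Local Notation side := ('I_m -> 'I_(m + m)).
Implicit Types (P Q A B H : P2).

Definition mf (mn : 'X_{1..m + m}) : nat := (\prod_(i < m + m) (mn i)`!)%N.
Definition fpt P Q mn : F := P@_mn * (Q@_mn)^* * (mf mn)%:R.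
Definition fp P Q : F := \sum_(mn <- msupp P) fpt P Q mn.

Lemma fpE (r : seq 'X_{1..m + m}) P Q : uniq r -> {subset msupp P <= r} ->
  fp P Q = \sum_(mn <- r) fpt P Q mn.
Proof.
move=> ur hsub; rewrite /fp [RHS](bigID (fun mn => mn \in msupp P)) /=.
rewrite [X in _ + X]big1 ?addr0; last by move=> mn /memN_msupp_eq0; rewrite /fpt => ->; rewrite !mul0r.
rewrite -[RHS]big_filter; apply: perm_big; apply: uniq_perm; [exact: msupp_uniq|exact: filter_uniq|].
move=> mn; rewrite mem_filter; case: (boolP (mn \in msupp P)) => /= h //; by rewrite hsub.
Qed.

Lemma fp0 Q : fp 0 Q = 0.
Proof. by rewrite (@fpE [::]) ?big_nil // => mn; rewrite mcoeff_msupp mcoeff0 eqxx. Qed.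

Lemma fpD P P' Q : fp (P + P') Q = fp P Q + fp P' Q.
Proof.
pose r := undup (msupp P ++ msupp P' ++ msupp (P + P')).
have ur : uniq r by apply: undup_uniq.
have s1 S mn : S \in [:: P; P'; P + P'] -> mn \in msupp S -> mn \in r.
  by rewrite !inE => /or3P [] /eqP -> h; rewrite mem_undup !mem_cat h ?orbT.
rewrite !(@fpE r) //; try by move=> mn; apply: s1; rewrite !inE eqxx ?orbT.
by rewrite -big_split; apply: eq_bigr => mn _; rewrite /fpt mcoeffD !mulrDl.
Qed.

Lemma fp_sum (I : Type) (r : seq I) (Pr : pred I) (G : I -> P2) Q :
  fp (\sum_(i <- r | Pr i) G i) Q = \sum_(i <- r | Pr i) fp (G i) Q.
Proof. exact: (big_morph (fun P => fp P Q) (fun x y => fpD x y Q) (fp0 Q)). Qed.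

Lemma fpQ0 P : fp P 0 = 0.
Proof. by rewrite /fp big1 // => mn _; rewrite /fpt mcoeff0 rmorph0 mulr0 mul0r. Qed.
Lemma fpQD P Q Q' : fp P (Q + Q') = fp P Q + fp P Q'.
Proof. by rewrite /fp -big_split; apply: eq_bigr => mn _; rewrite /fpt mcoeffD rmorphD mulrDr mulrDl. Qed.
Lemma fpQ_sum (I : Type) (r : seq I) (Pr : pred I) (G : I -> P2) P :
  fp P (\sum_(i <- r | Pr i) G i) = \sum_(i <- r | Pr i) fp P (G i).
Proof. exact: (big_morph (fun Q => fp P Q) (fpQD P) (fpQ0 P)). Qed.

Lemma mfU (i : 'I_(m + m)) mn : mf (U_(i) + mn)%MM = ((mn i).+1 * mf mn)%N.
Proof.
rewrite /mf (bigD1 i) //= [in RHS](bigD1 i) //= mnmDE mnm1E eqxx add1n factS mulnA.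
congr (_ * _)%N; apply: eq_bigr => j hj; by rewrite mnmDE mnm1E eq_sym (negbTE hj).
Qed.

Lemma fpX P Q (i : 'I_(m + m)) : fp (P * 'X_i) Q = fp P (mderiv i Q).
Proof.
rewrite /fp (perm_big _ (msuppMX P U_(i))) big_map; apply: eq_bigr => mn _.
rewrite /fpt mcoeffMX mcoeff_deriv rmorphMn mfU addmC -mulr_natr natrM; ring.
Qed.

Lemma fpLap (s : side) A H : fp (nrm F s * A) H = fp A (Lap s H).
Proof.
rewrite /nrm mulr_suml fp_sum /Lap fpQ_sum; apply: eq_bigr => j _.
have -> : ('X_(s j) : P2) ^+ 2 * A = A * 'X_(s j) * 'X_(s j) by rewrite expr2; ring.
by rewrite !fpX.
Qed.

Lemma fp_pos H : fp H H = 0 -> H = 0.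
Proof.
move=> h0; apply/mpolyP => mn; rewrite mcoeff0.
case: (boolP (mn \in msupp H)) => [hin|/memN_msupp_eq0 //]; exfalso.
have ge b : 0 <= fpt H H b by rewrite /fpt mulr_ge0 ?mul_conjC_ge0 ?ler0n.
have gt : 0 < fpt H H mn.
  rewrite /fpt mulr_gt0 ?mul_conjC_gt0 -?mcoeff_msupp // ltr0n /mf.
  by apply/prodn_gt0 => i; apply: fact_gt0.
move: h0; rewrite /fp (big_rem _ hin) /= => h0.
have : 0 < fpt H H mn + \sum_(y <- rem mn (msupp H)) fpt H H y.
  by apply: (lt_le_trans gt); rewrite lerDl sumr_ge0.
by rewrite h0 ltxx.
Qed.

Lemma uniq_harm (s t : side) H A B : Lap s H = 0 -> Lap t H = 0 ->
  H = nrm F s * A + nrm F t * B -> H = 0.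
Proof.
move=> h1 h2 hE; apply: fp_pos.
by rewrite {1}hE fpD !fpLap h1 h2 !fpQ0 addr0.
Qed.

End Pair.

Section Conc.
Variables (F : numClosedFieldType) (m : nat) (hm : (0 < m)%N).
Local Notation P2 := (poly2 F m).
Local Notation l := (@lshift m m).
Local Notation r := (@rshift m m).
Implicit Types (P Q A B H : P2).

Let hl : injective l := @lshift_inj m m.
Let hr : injective r := @rshift_inj m m.
Let hlr a b : l a != r b. Proof. by rewrite eq_lrshift. Qed.
Let hrl a b : r a != l b. Proof. by rewrite eq_rlshift. Qed.

Lemma conv_nx : normx2 F m = nrm F l. Proof. by []. Qed.
Lemma conv_nu : normu2 F m = nrm F r. Proof. by []. Qed.
Lemma conv_ux : ux F m = pr F r l. Proof. by []. Qed.
Lemma conv_Lx P : Lapx P = Lap l P. Proof. by []. Qed.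
Lemma conv_Lu P : Lapu P = Lap r P. Proof. by []. Qed.
Lemma conv_udx P : udx P = mix r l P. Proof. by []. Qed.
Lemma conv_xdu P : xdu P = mix l r P. Proof. by []. Qed.
Lemma conv_dudx P : dudx P = dd r l P. Proof. by []. Qed.
Lemma conv_bih p q P : bihomog p q P = homs l p P && homs r q P.
Proof. by rewrite /bihomog -all_predI. Qed.

Lemma fischer2 p q P : homs l p P -> homs r q P ->
 exists Hf : nat -> nat -> P2, (forall a b, Lap l (Hf a b) = 0 /\ Lap r (Hf a b) = 0) /\
   P = \sum_(a < (p + q).+1) \sum_(b < (p + q).+1) nrm F l ^+ a * nrm F r ^+ b * Hf a b /\
   homs l p (Hf 0%N 0%N) /\ homs r q (Hf 0%N 0%N).
Proof.
move=> hP hQ.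
have [h [[h1 h2 h3 h4 h5] h6]] := fischer1 hl hlr hm hP.
have hg a : exists g : nat -> P2,
  [/\ forall b, Lap r (g b) = 0,
      forall b, homs r (q - 2 * b) (g b),
      forall b, (q < 2 * b)%N -> g b = 0,
      (forall q', homs l q' (h a) -> forall b, homs l q' (g b))
    & (Lap l (h a) = 0 -> forall b, Lap l (g b) = 0)]
   /\ h a = \sum_(b < q.+1) nrm F r ^+ b * g b.
  by apply: (fischer1 hr hrl hm); apply: h4.
pose Gc := fun a => proj1_sig (constructive_indefinite_description _ (hg a)).
have hG a := proj2_sig (constructive_indefinite_description _ (hg a)).
exists (fun a b => if (a <= p)%N then Gc a b else 0); split; [|split; [|split]].
- move=> a b; case: ifP => _; last by rewrite !raddf0.
  have [[g1 _ _ _ g5] _] := hG a; split; [exact: g5 | exact: g1].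
- rewrite {1}h6 (sum_widen (G := fun a => \sum_(b < (p+q).+1) nrm F l ^+ a * nrm F r ^+ b * (if (a <= p)%N then Gc a b else 0)) (n1 := p.+1)); [|lia|]; last first.
    move=> a ha _; rewrite big1 // => b _; case: ifP => //; first lia.
    by rewrite mulr0.
  apply: eq_bigr => a _; have ha : (a <= p)%N by rewrite -ltnS ltn_ord.
  rewrite ha /=.
  have [[_ _ g3 _ _] g6] := hG a; rewrite -/(Gc a) in g3 g6.
  rewrite g6 (sum_widen (G := fun b => nrm F l ^+ a * nrm F r ^+ b * Gc a b) (n1 := q.+1) (n2 := (p + q).+1)); [|lia|]; last first.
    by move=> b hb _; rewrite g3 ?mulr0 //; lia.
  by rewrite mulr_sumr; apply: eq_bigr => b _; rewrite mulrA.
- have [[_ _ _ g4 _] _] := hG 0%N.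
  by apply: g4; apply: (homs_ext _ (h2 0%N)); lia.
- have [[_ g2 _ _ _] _] := hG 0%N.
  by apply: (homs_ext _ (g2 0%N)); lia.
Qed.

Definition inI P := exists A B, P = nrm F l * A + nrm F r * B.

Lemma inI0 : inI 0.
Proof. by exists 0, 0; rewrite !mulr0 addr0. Qed.
Lemma inID P Q : inI P -> inI Q -> inI (P + Q).
Proof. by move=> [A [B ->]] [A' [B' ->]]; exists (A + A'), (B + B'); ring. Qed.
Lemma inIN P : inI P -> inI (- P).
Proof. by move=> [A [B ->]]; exists (- A), (- B); ring. Qed.
Lemma inIB P Q : inI P -> inI Q -> inI (P - Q).
Proof. by move=> h1 h2; apply: inID => //; apply: inIN. Qed.
Lemma inIM P Q : inI P -> inI (Q * P).
Proof. by move=> [A [B ->]]; exists (Q * A), (Q * B); ring. Qed.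
Lemma inIZ c P : inI P -> inI (c *: P).
Proof. by move=> h; rewrite -mul_mpolyC; apply: inIM. Qed.
Lemma inIl A : inI (nrm F l * A).
Proof. by exists A, 0; rewrite mulr0 addr0. Qed.
Lemma inIr B : inI (nrm F r * B).
Proof. by exists 0, B; rewrite mulr0 add0r. Qed.

Lemma inI_sum (I : Type) (rr : seq I) (Pr : pred I) (G : I -> P2) :
  (forall i, Pr i -> inI (G i)) -> inI (\sum_(i <- rr | Pr i) G i).
Proof. by move=> h; apply: (big_ind inI) => //; [apply: inI0|apply: inID]. Qed.

Lemma is_pis_dec P H : is_pis P H -> (Lap l H = 0 /\ Lap r H = 0) /\ inI (P - H).
Proof.
move=> [N [Hf [hd [hP ->]]]]; split; first exact: hd.
rewrite hP big_ord_recl big_ord_recl /= !expr0 !mul1r.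
have -> : forall x y z : P2, x + y + z - x = y + z by move=> x y z; ring.
apply: inID; apply: inI_sum => i _.
  by rewrite mul1r /bump /= add1n exprS -mulrA; apply: inIr.
apply: inI_sum => j _.
by rewrite /bump /= add1n exprS -!mulrA; apply: inIl.
Qed.

Lemma pis_exists p q P : homs l p P -> homs r q P ->
  exists H, [/\ is_pis P H, homs l p H & homs r q H].
Proof.
move=> h1 h2; have [Hf [hd [hs [e1 e2]]]] := fischer2 h1 h2.
by exists (Hf 0%N 0%N); split => //; exists (p + q)%N, Hf; split.
Qed.

Lemma pisE p q P H : homs l p P -> homs r q P -> Lap l H = 0 -> Lap r H = 0 ->
  inI (P - H) -> pis P = H.
Proof.
move=> h1 h2 hl0 hr0 hI.
have [H0 [hp _ _]] := pis_exists h1 h2.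
have sp : is_pis P (pis P) by apply: epsilon_spec; exists H0.
have [[d1 d2] hI'] := is_pis_dec sp.
have [A [B E]] : inI (H - pis P).
  have -> : H - pis P = (P - pis P) - (P - H) by ring.
  by apply: inIB.
apply/eqP; rewrite eq_sym -subr_eq0; apply/eqP.
apply: (uniq_harm (s:=l) (t:=r) _ _ E); by rewrite raddfB /= ?hl0 ?hr0 ?d1 ?d2 subrr.
Qed.

Lemma pis_spec p q P : homs l p P -> homs r q P ->
  [/\ Lap l (pis P) = 0, Lap r (pis P) = 0, homs l p (pis P), homs r q (pis P) & inI (P - pis P)].
Proof.
move=> h1 h2; have [H0 [hp e1 e2]] := pis_exists h1 h2.
have [[d1 d2] hI] := is_pis_dec hp.
by rewrite (pisE h1 h2 d1 d2 hI).
Qed.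

End Conc.

Section Main.
Variables (F : numClosedFieldType) (m : nat) (hm4 : (4 < m)%N).
Local Notation P2 := (poly2 F m).
Local Notation l := (@lshift m m).
Local Notation r := (@rshift m m).
Implicit Types (P Q A B H Y Z : P2).

Let hm : (0 < m)%N. Proof. lia. Qed.
Let hl : injective l := @lshift_inj m m.
Let hr : injective r := @rshift_inj m m.
Let hlr a b : l a != r b. Proof. by rewrite eq_lrshift. Qed.
Let hrl a b : r a != l b. Proof. by rewrite eq_rlshift. Qed.

Definition dharm2 Z := Lap l Z = 0 /\ Lap r Z = 0.

Lemma prC : pr F r l = pr F l r.
Proof. by rewrite /pr; apply: eq_bigr => j _; rewrite mulrC. Qed.

Lemma LapC s c Y : Lap s (c%:MP * Y) = c%:MP * Lap s Y.
Proof. by rewrite !mul_mpolyC linearZ. Qed.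
Lemma mixC s t c Y : mix s t (c%:MP * Y) = c%:MP * mix s t Y.
Proof. by rewrite !mul_mpolyC linearZ. Qed.

Lemma homs_mix_s (s t : 'I_m -> 'I_(m + m)) (hs : injective s) (hst : forall a b, s a != t b) p Y :
  homs s p Y -> homs s p.-1 (mix t s Y) /\ (p = 0%N -> mix t s Y = 0).
Proof.
move=> h; split.
  apply: homs_sum => j _; apply: (homs_ext (add0n _)); apply: homsM.
    exact: (homsXt F hst).
  exact: homs_Ds.
by move=> p0; rewrite /mix big1 // => j _; rewrite (homs_Ds0 hs) ?mulr0 // -p0.
Qed.
Lemma homs_mix_t (s t : 'I_m -> 'I_(m + m)) (ht : injective t) (hst : forall a b, s a != t b) q Y :
  homs t q Y -> homs t q.+1 (mix t s Y).
Proof.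
move=> h; apply: homs_sum => j _; apply: (homs_ext (add1n _)); apply: homsM.
  exact: (homsXs F ht).
have hts : forall a b, t a != s b by move=> a b; rewrite eq_sym.
exact: (homs_Dt hts j h).
Qed.

Lemma hLapN (s : 'I_m -> 'I_(m + m)) (hs : injective s) p Y :
  homs s p.-1 Y -> (p = 0%N -> Y = 0) -> Lap s Y = 0 ->
  Lap s (nrm F s * Y) = Y *+ (2 * (m + 2 * p - 2)).
Proof.
move=> h h0 hL; case: p h h0 => [|p] h h0; first by rewrite h0 // mulr0 raddf0 mul0rn.
rewrite (I1 hs) (Euler h) hL mulr0 addr0 -mulrnA -mulrnDr; congr (_ *+ _); lia.
Qed.

Lemma homs_pr_l : homs l 1 (pr F r l).
Proof. apply: homs_sum => j _; apply: (homs_ext (add0n _)); apply: homsM; [exact: (homsXt F hlr)|exact: (homsXs F hl)]. Qed.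
Lemma homs_pr_r : homs r 1 (pr F r l).
Proof. apply: homs_sum => j _; apply: (homs_ext (addn0 _)); apply: homsM; [exact: (homsXs F hr)|exact: (homsXt F hrl)]. Qed.

Lemma Su_spec p q Z : homs l p Z -> homs r q Z ->
  [/\ dharm2 (Su Z), homs l p.-1 (Su Z), homs r q.+1 (Su Z) & inI (udx Z - Su Z)].
Proof.
move=> h1 h2; have [h3 _] := homs_mix_s hl hlr h1.
have h4 := homs_mix_t hr hlr h2.
by have [d1 d2 e1 e2 e3] := pis_spec hm h3 h4.
Qed.

Lemma C_spec p q Y : homs l p Y -> homs r q Y ->
  [/\ dharm2 (Cop Y), homs l p.+1 (Cop Y), homs r q.+1 (Cop Y) & inI (ux F m * Y - Cop Y)].
Proof.
move=> h1 h2; have h3 : homs l (1 + p) (ux F m * Y) by apply: homsM => //; apply: homs_pr_l.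
have h4 : homs r (1 + q) (ux F m * Y) by apply: homsM => //; apply: homs_pr_r.
by have [d1 d2 e1 e2 e3] := pis_spec hm h3 h4.
Qed.

Lemma CopZ p q c Y : homs l p Y -> homs r q Y -> Cop (c *: Y) = c *: Cop Y.
Proof.
move=> h1 h2; have [[d1 d2] _ _ hI] := C_spec h1 h2.
have h3 : homs l (1 + p) (ux F m * (c *: Y)) by apply: homsM; [apply: homs_pr_l|apply: homsZ].
have h4 : homs r (1 + q) (ux F m * (c *: Y)) by apply: homsM; [apply: homs_pr_r|apply: homsZ].
apply: (pisE hm h3 h4); rewrite ?linearZ /= ?d1 ?d2 ?scaler0 //.
by rewrite -scalerAr -scalerDr; apply: inIZ.
Qed.

Definition da (p : nat) : F := ((m + 2 * p - 2)%N%:R)^-1.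

Lemma da_nz p : ((m + 2 * p - 2)%N%:R : F) != 0.
Proof. by rewrite pnatr_eq0; apply/eqP; lia. Qed.

Lemma daK p Y : (da p)%:MP * (Y *+ (2 * (m + 2 * p - 2))) = Y *+ 2.
Proof.
by rewrite /da mul_mpolyC mulrnA -[(Y *+ 2) *+ _]scaler_nat scalerA mulVf ?da_nz // scale1r.
Qed.

Definition Wf p q Z : P2 :=
  ux F m * Z - (da p)%:MP * (nrm F l * udx Z) - (da q)%:MP * (nrm F r * xdu Z)
  + (da p)%:MP * ((da q)%:MP * (nrm F l * nrm F r * dudx Z)).

Lemma C_formula p q Z : homs l p Z -> homs r q Z -> dharm2 Z -> Cop Z = Wf p q Z.
Proof.
move=> h1 h2 [z1 z2].
have h3 : homs l (1 + p) (ux F m * Z) by apply: homsM => //; apply: homs_pr_l.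
have h4 : homs r (1 + q) (ux F m * Z) by apply: homsM => //; apply: homs_pr_r.
have [hm1 hm0] := homs_mix_s hl hlr h1.
have [hn1 hn0] := homs_mix_s hr hrl h2.
have A1 : Lap l (ux F m * Z) = udx Z *+ 2.
  by rewrite conv_ux (I4 hl hlr) z1 mulr0 addr0.
have A2 : Lap l (nrm F l * udx Z) = udx Z *+ (2 * (m + 2 * p - 2)).
  apply: (hLapN hl hm1 hm0); by rewrite ?conv_udx (I5 hlr) z1 raddf0.
have A3 : Lap l (nrm F r * xdu Z) = nrm F r * (dudx Z *+ 2).
  by rewrite (I2 hlr) conv_xdu (I6 r hl) z1 raddf0 addr0 ddC.
have hd1 : homs l p.-1 (nrm F r * dudx Z).
  apply: (homs_ext (add0n _)); apply: homsM; first exact: (homs_nrm_t F hrl).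
  apply: homs_sum => j _; apply: (homs_Dt hlr); exact: homs_Ds.
have hd0 : p = 0%N -> nrm F r * dudx Z = 0.
  by move=> p0; rewrite conv_dudx /dd big1 ?mulr0 // => j _; rewrite (homs_Ds0 hl) ?mderiv0 // -p0.
have A4 : Lap l (nrm F l * nrm F r * dudx Z) = (nrm F r * dudx Z) *+ (2 * (m + 2 * p - 2)).
  rewrite -mulrA; apply: (hLapN hl hd1 hd0).
  by rewrite (I2 hlr) conv_dudx (I10 l r) z1 raddf0 mulr0.
have B1 : Lap r (ux F m * Z) = xdu Z *+ 2.
  by rewrite conv_ux prC (I4 hr hrl) z2 mulr0 addr0.
have B2 : Lap r (nrm F l * udx Z) = nrm F l * (dudx Z *+ 2).
  by rewrite (I2 hrl) conv_udx (I6 l hr) z2 raddf0 addr0.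
have B3 : Lap r (nrm F r * xdu Z) = xdu Z *+ (2 * (m + 2 * q - 2)).
  apply: (hLapN hr hn1 hn0); by rewrite ?conv_xdu (I5 hrl) z2 raddf0.
have he1 : homs r q.-1 (dudx Z).
  apply: homs_sum => j _; apply: homs_Ds => //; exact: (homs_Dt hrl).
have he0 : q = 0%N -> dudx Z = 0.
  move=> q0; rewrite conv_dudx /dd big1 // => j _.
  by rewrite (homs_Ds0 hr) // -q0; apply: (homs_Dt hrl).
have B4 : Lap r (nrm F l * nrm F r * dudx Z) = nrm F l * (dudx Z *+ (2 * (m + 2 * q - 2))).
  rewrite -mulrA (I2 hrl); congr (_ * _); apply: (hLapN hr he1 he0).
  by rewrite conv_dudx ddC (I10 r l) z2 raddf0.
apply: (pisE hm h3 h4).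
- rewrite /Wf !(raddfD, raddfN) /= !LapC A1 A2 A3 A4 daK.
  rewrite [(da p)%:MP * (_ * _)]mulrCA daK; ring.
- rewrite /Wf !(raddfD, raddfN) /= !LapC B1 B2 B3 B4 daK.
  rewrite [(da q)%:MP * (_ * _)]mulrCA daK; ring.
- rewrite /Wf.
  have -> : forall a b c d : P2, a - (a - b - c + d) = b + c - d by move=> *; ring.
  apply: inIB; first apply: inID.
  + by rewrite mulrCA; apply: inIl.
  + by rewrite mulrCA; apply: inIr.
  + by rewrite -!mulrA; apply: inIM; apply: inIM; apply: inIl.
Qed.

Definition kf p : F := 1 - da p *+ 2.

Lemma kfC p : (kf p)%:MP = 1 - (da p)%:MP *+ 2 :> P2.
Proof. by rewrite /kf rmorphB rmorph1 rmorphMn. Qed.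

Lemma key p q Z : homs l p Z -> homs r q Z -> dharm2 Z ->
  Su (Cop Z) = kf p *: Cop (Su Z).
Proof.
move=> h1 h2 hZ.
have [[c1 c2] c3 c4 _] := C_spec h1 h2.
have [hP1 _] := homs_mix_s hl hlr c3.
have hP2 := homs_mix_t hr hlr c4.
have [[s1 s2] s3 s4 sI] := Su_spec h1 h2.
have [[e1 e2] _ _ eI] := C_spec s3 s4.
apply: (pisE hm hP1 hP2).
- by rewrite linearZ /= e1 scaler0.
- by rewrite linearZ /= e2 scaler0.
rewrite -mul_mpolyC kfC.
set a := (da p)%:MP; pose b : P2 := (da q)%:MP.
set CS := Cop (Su Z) in eI *.
rewrite conv_ux in eI; rewrite conv_udx in sI.
have EX : mix r l (Cop Z) = nrm F r * Z + pr F r l * mix r l Z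
   - a * ((pr F r l * mix r l Z) *+ 2 + nrm F l * mix r l (mix r l Z))
   - b * (nrm F r * mix r l (mix l r Z))
   + a * (b * ((pr F r l * (nrm F r * dd r l Z)) *+ 2 + nrm F l * mix r l (nrm F r * dd r l Z))).
  rewrite (C_formula h1 h2 hZ) /Wf !(raddfD, raddfN) /= !mixC conv_ux (I7 hl hlr) (I8 r hl) (I9 hlr).
  by rewrite -[nrm F l * nrm F r * _]mulrA (I8 r hl).
rewrite ?conv_udx EX.
have -> : forall (x0 x1 x2 x3 x4 C : P2),
   nrm F r * Z + pr F r l * x0 - a * (pr F r l * x0 *+ 2 + nrm F l * x1) - b * (nrm F r * x2)
   + a * (b * (pr F r l * (nrm F r * x3) *+ 2 + nrm F l * x4)) - (1 - a *+ 2) * C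
   = nrm F l * (a * (b * x4) - a * x1) + nrm F r * (Z - b * x2 + a * (b * (pr F r l * x3 *+ 2)))
     + (1 - a *+ 2) * (pr F r l * (x0 - Su Z)) + (1 - a *+ 2) * (pr F r l * Su Z - C).
  by move=> *; ring.
apply: inID; first apply: inID; first apply: inID.
- exact: inIl.
- exact: inIr.
- by apply: inIM; apply: inIM.
- by apply: inIM.
Qed.


Lemma iterC_spec p q Y : homs l p Y -> homs r q Y -> dharm2 Y -> forall i,
  [/\ dharm2 (iter i (@Cop F m) Y), homs l (p + i) (iter i (@Cop F m) Y) & homs r (q + i) (iter i (@Cop F m) Y)].
Proof.
move=> h1 h2 hY; elim=> [|i [d e1 e2]]; first by rewrite !addn0.
have [d' e1' e2' _] := C_spec e1 e2.
by rewrite !addnS.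
Qed.

Lemma iterS_spec p q Y : homs l p Y -> homs r q Y -> dharm2 Y -> forall j,
  [/\ dharm2 (iter j (@Su F m) Y), homs l (p - j) (iter j (@Su F m) Y) & homs r (q + j) (iter j (@Su F m) Y)].
Proof.
move=> h1 h2 hY; elim=> [|j [d e1 e2]]; first by rewrite subn0 addn0.
have [d' e1' e2' _] := Su_spec e1 e2.
by rewrite subnS addnS.
Qed.

Lemma Su_iterC p q Y : homs l p Y -> homs r q Y -> dharm2 Y -> forall i,
  Su (iter i (@Cop F m) Y) = (\prod_(t < i) kf (p + t)) *: iter i (@Cop F m) (Su Y).
Proof.
move=> h1 h2 hY; have [f0 f1 f2 _] := Su_spec h1 h2.
elim=> [|i ih]; first by rewrite big_ord0 scale1r.
have [d e1 e2] := iterC_spec h1 h2 hY i.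
have [_ g1 g2] := iterC_spec f1 f2 f0 i.
rewrite /= (key e1 e2 d) ih (CopZ _ g1 g2) scalerA big_ord_recr /= mulrC.
by [].
Qed.

Definition Dn (n : nat) : F := (m + 2 * n - 2)%N%:R.

Lemma DnE n : Dn n = m%:R + 2 * n%:R - 2.
Proof. rewrite /Dn natrB ?natrD ?natrM; [ring|lia]. Qed.

Lemma kfE n : kf n = (Dn n - 2) / Dn n.
Proof.
rewrite /kf /da -/(Dn n); have hD : Dn n != 0 by exact: da_nz.
by field.
Qed.

Lemma tele p i : \prod_(t < i) kf (p + t) = (Dn p - 2) / (Dn (p + i) - 2).
Proof.
have hD n : Dn n - 2 != 0.
  rewrite DnE; have -> : m%:R + 2 * n%:R - 2 - 2 = ((m - 4) + 2 * n)%N%:R :> F.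
    by rewrite natrD natrM natrB //; [ring | lia].
  by rewrite pnatr_eq0; apply/eqP; lia.
elim: i => [|i ih]; first by rewrite big_ord0 addn0 divff.
rewrite big_ord_recr /= ih kfE.
have hD' : Dn (p + i) != 0 by exact: da_nz.
have -> : Dn (p + i.+1) - 2 = Dn (p + i) by rewrite !DnE addnS -addn1 natrD; ring.
have h3 := hD (p + i). by field; rewrite hD' h3.
Qed.

End Main.

Unset Implicit Arguments.
Set Strict Implicit.

Theorem proposition4p1 (F : numClosedFieldType) (m : nat) (hm : (4 < m)%N)
  (k l : nat) (hkl : (l <= k)%N) (H : poly2 F m) (hH : Hkl k l H)
  (i j : nat) (hj : (j <= k - l)%N) :
  let P := iter i (@Cop F m) (iter j (@Su F m) H) in
  let hx := Hx_eig F m ((k + i)%:Z - (j.+1)%:Z) in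
  Cop P = iter i.+1 (@Cop F m) (iter j (@Su F m) H) /\
  Su P = ((hx + i.+1%:R) / (hx + 1)) *: iter i (@Cop F m) (iter j.+1 (@Su F m) H).
Proof.
move=> P hx; split; first by [].
move: hH => [hb [h1 [h2 _]]].
rewrite conv_bih in hb; case/andP: hb => hb1 hb2.
have [d e1 e2] := iterS_spec hm hb1 hb2 (conj h1 h2) j.
rewrite /P (Su_iterC hm e1 e2 d) /=; congr (_ *: _).
rewrite (@tele F m hm) /hx /Hx_eig intrB -!pmulrn !(@DnE F m hm).
have hjk : (j <= k)%N by lia.
rewrite !natrD (natrB _ hjk) -!natr1.
have E : (m%:R + 2 * (k%:R - j%:R + i%:R) - 2 - 2 : F) = (m - 4 + 2 * (k - j + i))%N%:R.
  rewrite natrD natrM natrD (natrB _ hjk) natrB; [ring|lia].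
have nz : ((m - 4 + 2 * (k - j + i))%N%:R : F) != 0 by rewrite pnatr_eq0; apply/eqP; lia.
have E2 : - ((k%:R + i%:R - (j%:R + 1)) * 2 + m%:R) + 2 = - (m%:R + 2 * (k%:R - j%:R + i%:R) - 2 - 2) :> F by ring.
field; by rewrite E2 oppr_eq0 E nz.
Qed.
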